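(* For each $n$ let $0<p_n,q_n\le 1$, let $M=\lceil n^2/p_n\rceil$, and let $\alpha$ be any initial configuration of $n$ cards. Play $M$ moves of $p_n$-random $q_n$-proportion Bulgarian solitaire $\mathscr{B}(n,p_n,q_n)$ starting from $\alpha$. Then, with probability tending to $1$ as $n\to\infty$, every pile present in $\alpha$ has been completely consumed (contains no cards) after these $M$ moves.
   Context: $\mathscr{B}(n,p,q)$ ($0<p,q\le 1$) is played on $n$ identical cards distributed in piles. In one move, from each pile of size $h$ the top $\lceil qh\rceil$ cards are candidates; each candidate card is picked with probability $p$, independently of all other candidates; the picked cards are removed and together form one new pile. Piles are tracked individually (ordered by time of creation), so that one can follow what happens to each pile of the initial configuration. *)

(* Defs.v *)
From HB Require Import structures.
From mathcomp Require Import all_boot all_order all_algebra.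
From mathcomp Require Import all_classical all_reals all_analysis.
Set Implicit Arguments. Unset Strict Implicit. Unset Printing Implicit Defensive.
Import Order.TTheory GRing.Theory Num.Theory.
Import numFieldNormedType.Exports.
Local Open Scope ring_scope.

(* A configuration is the sequence of pile sizes, ordered by time of creation.
   Piles are never deleted (an emptied pile stays as a 0 entry), so that the
   piles of the initial configuration are always the first [size alpha]
   entries.  Since cards are identical, a move is determined by the number
   k_i of cards picked from each pile i. *)

Definition ncand {R : realType} (q : R) (h : nat) : nat :=
  `|Num.ceil (q * h%:R)|%N.

Fixpoint pick_vecs (cs : seq nat) : seq (seq nat) :=
  match cs with
  | [::] => [:: [::]]
  | c :: cs' => [seq k :: v | k <- iota 0 c.+1, v <- pick_vecs cs']
  end.

Definition binom_pmf {R : realType} (p : R) (c k : nat) : R :=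
  'C(c, k)%:R * p ^+ k * (1 - p) ^+ (c - k).

Definition move_weight {R : realType} (p q : R) (s ks : seq nat) : R :=
  \prod_(i < size s) binom_pmf p (ncand q (nth 0%N s i)) (nth 0%N ks i).

Definition move_result (s ks : seq nat) : seq nat :=
  rcons [seq (x.1 - x.2)%N | x <- zip s ks] (sumn ks).

Fixpoint prob_first_empty {R : realType} (p q : R) (m L : nat) (s : seq nat) : R :=
  match m with
  | 0%N => if all (fun h => h == 0%N) (take L s) then 1 else 0
  | m'.+1 => \sum_(ks <- pick_vecs [seq ncand q h | h <- s])
               move_weight p q s ks * prob_first_empty p q m' L (move_result s ks)
  end.

Definition is_config (n : nat) (alpha : seq nat) : bool :=
  all (fun h => 0 < h)%N alpha && (sumn alpha == n).

(* Main.v *)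
Require Import Defs.
From HB Require Import structures.
From mathcomp Require Import all_boot all_order all_algebra.
From mathcomp Require Import all_classical all_reals all_analysis.
From mathcomp Require Import ring lra.
Import Order.TTheory GRing.Theory Num.Theory.
Import numFieldNormedType.Exports.
Local Open Scope classical_set_scope.
Local Open Scope ring_scope.
Section Comb.
Variable R : realType.

Lemma sum_pick (cs : seq nat) (F : nat -> nat -> R) :
  \sum_(ks <- pick_vecs cs) \prod_(i < size cs) F i (nth 0%N ks i)
  = \prod_(i < size cs) \sum_(k < (nth 0%N cs i).+1) F i k.
Proof.
elim: cs F => [|c cs IH] F.
  by rewrite /= big_seq1 !big_ord0.
have -> : pick_vecs (c::cs) = [seq k :: v | k <- iota 0 c.+1, v <- pick_vecs cs] by [].
have E : forall (G : seq nat -> R), \sum_(ks <- [seq k :: v | k <- iota 0 c.+1, v <- pick_vecs cs]) G ks = \sum_(k <- iota 0 c.+1) \sum_(v <- pick_vecs cs) G (k :: v).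
  by move=> G; exact: big_allpairs_dep.
have inner : forall k v, \prod_(i < (size cs).+1) F i (nth 0%N (k::v) i) = F 0%N k * \prod_(i < size cs) F i.+1 (nth 0%N v i).
  by move=> k v; rewrite big_ord_recl.
have -> : size (c :: cs) = (size cs).+1 by [].
rewrite E big_ord_recl.
under eq_bigr => k _.
  under eq_bigr => v _ do rewrite inner.
  rewrite -mulr_sumr (IH (fun i => F i.+1)).
  over.
rewrite -mulr_suml.
congr (_ * _).
by rewrite -(big_mkord xpredT) /index_iota subn0.
Qed.

Lemma size_pick (cs : seq nat) ks : ks \in pick_vecs cs -> size ks = size cs.
Proof.
elim: cs ks => [|c cs IH] ks; first by rewrite inE => /eqP ->.
have -> : pick_vecs (c::cs) = [seq k :: v | k <- iota 0 c.+1, v <- pick_vecs cs] by [].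
case/allpairsPdep => k [v [_ hv ->]] /=.
by rewrite (IH _ hv).
Qed.


Lemma prod_ifeq n (i0 : 'I_n) (G : nat -> R) :
  \prod_(i < n) (if (i : nat) == (i0 : nat) then G i else 1) = G i0.
Proof.
rewrite (bigD1 i0) //= eqxx big1 ?mulr1 // => i hi.
by case: eqP => // /val_inj h; rewrite h eqxx in hi.
Qed.

Lemma marg (cs : seq nat) (b : nat -> nat -> R) (i0 : nat) (f : nat -> R) :
  (i0 < size cs)%N ->
  (forall i, (i < size cs)%N -> \sum_(k < (nth 0%N cs i).+1) b i k = 1) ->
  \sum_(ks <- pick_vecs cs) (\prod_(i < size cs) b i (nth 0%N ks i)) * f (nth 0%N ks i0)
  = \sum_(k < (nth 0%N cs i0).+1) b i0 k * f k.
Proof.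
move=> hi0 hb.
transitivity (\sum_(ks <- pick_vecs cs) \prod_(i < size cs) (b i (nth 0%N ks i) * (if (i:nat) == i0 then f (nth 0%N ks i) else 1))).
  apply eq_bigr => ks _.
  by rewrite big_split /= (@prod_ifeq _ (Ordinal hi0) (fun i => f (nth 0%N ks i))).
rewrite (sum_pick cs (fun i k => b i k * (if i == i0 then f k else 1))).
rewrite (bigD1 (Ordinal hi0)) //= [X in _ * X]big1 ?mulr1.
  by apply: eq_bigr => k _; rewrite eqxx.
move=> i hi.
have hne : ((i : nat) == i0) = false.
  by apply/negbTE; apply: contra hi => /eqP h; apply/eqP; apply: val_inj.
under eq_bigr => k _ do rewrite hne mulr1.
exact: hb.
Qed.

Variables (p q : R).
Hypothesis hp : 0 < p <= 1.
Hypothesis hq : 0 < q <= 1.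

Lemma binom_sum c : \sum_(k < c.+1) binom_pmf p c k = 1.
Proof.
have := exprDn (1 - p) p c.
rewrite subrK expr1n => ->.
apply: eq_bigr => k _; rewrite /binom_pmf -mulr_natl; ring.
Qed.

Lemma binom_ge0 c k : 0 <= binom_pmf p c k.
Proof.
case/andP: hp => hp0 hp1.
rewrite /binom_pmf; apply: mulr_ge0; first apply: mulr_ge0.
- exact: ler0n.
- by apply: exprn_ge0; rewrite ltW.
- by apply: exprn_ge0; rewrite subr_ge0.
Qed.

Lemma weight_ge0 s ks : 0 <= move_weight p q s ks.
Proof. by apply: prodr_ge0 => i _; apply: binom_ge0. Qed.

Lemma weight_marg s i0 (f : nat -> R) : (i0 < size s)%N ->
  \sum_(ks <- pick_vecs [seq ncand q h | h <- s]) move_weight p q s ks * f (nth 0%N ks i0)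
  = \sum_(k < (ncand q (nth 0%N s i0)).+1) binom_pmf p (ncand q (nth 0%N s i0)) k * f k.
Proof.
move=> hi.
have hs : size [seq ncand q h | h <- s] = size s by rewrite size_map.
have := @marg [seq ncand q h | h <- s] (fun i k => binom_pmf p (ncand q (nth 0%N s i)) k) i0 f.
rewrite hs => -> //; first by rewrite (nth_map 0%N).
by move=> i hi'; rewrite (nth_map 0%N) // binom_sum.
Qed.


Lemma weight_sum s :
  \sum_(ks <- pick_vecs [seq ncand q h | h <- s]) move_weight p q s ks = 1.
Proof.
rewrite /move_weight.
have := sum_pick [seq ncand q h | h <- s] (fun i k => binom_pmf p (ncand q (nth 0%N s i)) k).
rewrite size_map => ->.
by apply: big1 => i _; rewrite (nth_map 0%N) // binom_sum.
Qed.

Lemma prob_le1 m L s : prob_first_empty p q m L s <= 1.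
Proof.
elim: m s => [|m IH] s /=; first by case: ifP.
rewrite -(weight_sum s); apply: ler_sum => ks _.
by rewrite -[X in _ <= X]mulr1; apply: ler_wpM2l; [exact: weight_ge0 | exact: IH].
Qed.

Definition u := 1 - p / 2.
Definition g (m h : nat) : R := if h == 0%N then 0 else 2 ^+ h * u ^+ m.

Lemma u_ge0 : 0 <= u.
Proof. case/andP: hp => hp0 hp1; rewrite /u; lra. Qed.

Lemma g_ge0 m h : 0 <= g m h.
Proof.
rewrite /g; case: eqP => // _; apply: mulr_ge0; first exact: exprn_ge0.
exact: exprn_ge0 u_ge0.
Qed.

Lemma ncand_pos h : (0 < h)%N -> (0 < ncand q h)%N.
Proof.
move=> hh; case/andP: hq => hq0 hq1.
have hx : 0 < q * h%:R by apply: mulr_gt0 => //; rewrite ltr0n.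
rewrite /ncand absz_gt0; apply/eqP => h0.
have := ceil_le0 (q * h%:R); rewrite h0 lexx => /esym.
by rewrite leNgt hx.
Qed.

Lemma step_bound m h :
  \sum_(k < (ncand q h).+1) binom_pmf p (ncand q h) k * g m (h - k)
  <= g m.+1 h.
Proof.
case: h => [|h'].
  rewrite big1; first by rewrite /g. by move=> k _; rewrite sub0n /g /= mulr0.
have hc := @ncand_pos _ (ltn0Sn h').
set c := ncand q h'.+1 in hc *.
case/andP: hp => hp0 hp1.
set X := 2 ^+ h' * u ^+ m.
have hX : 0 <= X by apply: mulr_ge0; [exact: exprn_ge0 | exact: exprn_ge0 u_ge0].
have hb : \sum_(k < c.+1) binom_pmf p c k = 1 by exact: binom_sum.
rewrite big_ord_recl in hb *.
have hb0 : binom_pmf p c (@ord0 c) = (1 - p) ^+ c.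
  by rewrite /binom_pmf /= bin0 expr0 mulr1 mul1r subn0.
rewrite hb0 in hb *.
have hterm : forall k : 'I_c, binom_pmf p c (lift ord0 k) * g m (h'.+1 - lift ord0 k) <= binom_pmf p c (lift ord0 k) * X.
  move=> k; apply: ler_wpM2l; first exact: binom_ge0.
  rewrite lift0 subSS /g; case: eqP => _; first exact: hX.
  apply: ler_wpM2r; first exact: exprn_ge0 u_ge0.
  by apply: ler_weXn2l; [lra | exact: leq_subr].
have hS : \sum_(k < c) binom_pmf p c (lift ord0 k) * g m (h'.+1 - lift ord0 k) <= \sum_(k < c) binom_pmf p c (lift ord0 k) * X.
  by apply: ler_sum => k _; exact: hterm.
rewrite -mulr_suml in hS.
have ha : (1 - p) ^+ c <= 1 - p.
  case: c hc {hb hb0 hS hterm} => // c' _.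
  rewrite exprS; apply: ler_piMr; first lra.
  by apply: exprn_ile1; lra.
have ha0 : 0 <= (1 - p) ^+ c by apply: exprn_ge0; lra.
rewrite big_ord_recl hb0.
have -> : g m (h'.+1 - @ord0 c) = 2 * X by rewrite /g subn0 /= /X exprS mulrA.
have -> : g m.+1 h'.+1 = 2 * X * u by rewrite /g /= /X !exprS; ring.
have hS1 : \sum_(i < c) binom_pmf p c (lift ord0 i) = 1 - (1 - p) ^+ c.
  by rewrite -(addKr ((1 - p) ^+ c) (\sum_(i < c) binom_pmf p c (lift ord0 i))) hb addrC.
rewrite hS1 in hS.
rewrite /u.
nra.
Qed.


Lemma nth_move_result s ks i : (i < size s)%N -> size ks = size s ->
  nth 0%N (move_result s ks) i = (nth 0%N s i - nth 0%N ks i)%N.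
Proof.
move=> hi hks.
rewrite /move_result nth_rcons size_map size_zip hks minnn hi.
by rewrite (nth_map (0%N, 0%N)) ?size_zip ?hks ?minnn // nth_zip.
Qed.

Lemma main_bound m s L : (L <= size s)%N ->
  1 - \sum_(i < L) g m (nth 0%N s i) <= prob_first_empty p q m L s.
Proof.
elim: m s L => [|m IH] s L hL.
  rewrite /=.
  case: (boolP [exists i : 'I_L, nth 0%N s i != 0%N]).
    case/existsP => i hi.
    have h1 : 1 <= g 0 (nth 0%N s i).
      by rewrite /g (negbTE hi) expr0 mulr1 exprn_ege1 //; lra.
    have h2 : g 0 (nth 0%N s i) <= \sum_(j < L) g 0 (nth 0%N s j).
      rewrite (bigD1 i) //= lerDl; apply: sumr_ge0 => j _; exact: g_ge0.
    case: ifP => _; lra.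
  rewrite negb_exists => /forallP hall.
  have -> : all (fun h => h == 0%N) (take L s).
    apply/(all_nthP 0%N) => i; rewrite size_take_min => hi.
    have hiL : (i < L)%N by move: hi; rewrite leq_min => /andP [].
    rewrite nth_take //.
    by have := hall (Ordinal hiL); rewrite negbK.
  rewrite lerBlDr lerDl; apply: sumr_ge0 => j _; exact: g_ge0.
rewrite /=.
have hres : forall ks, ks \in pick_vecs [seq ncand q h | h <- s] ->
    1 - \sum_(i < L) g m (nth 0%N s i - nth 0%N ks i) <= prob_first_empty p q m L (move_result s ks).
  move=> ks hks.
  have hsz : size ks = size s by rewrite (@size_pick _ _ hks) size_map.
  have hL' : (L <= size (move_result s ks))%N.
    by rewrite /move_result size_rcons size_map size_zip hsz minnn; apply: leqW.
  have := IH (move_result s ks) L hL'.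
  suff -> : \sum_(i < L) g m (nth 0%N (move_result s ks) i) = \sum_(i < L) g m (nth 0%N s i - nth 0%N ks i) by [].
  apply: eq_bigr => i _; rewrite nth_move_result //.
  exact: leq_trans (ltn_ord i) hL.
set F := fun ks => move_weight p q s ks * (1 - \sum_(i < L) g m (nth 0%N s i - nth 0%N ks i)).
have H2 : \sum_(ks <- pick_vecs [seq ncand q h | h <- s]) F ks <= \sum_(ks <- pick_vecs [seq ncand q h | h <- s]) move_weight p q s ks * prob_first_empty p q m L (move_result s ks).
  rewrite big_seq_cond [X in _ <= X]big_seq_cond.
  apply: ler_sum => ks /andP [hks _].
  by apply: ler_wpM2l; [exact: weight_ge0 | exact: hres].
apply: le_trans H2.
rewrite /F.
rewrite [X in _ <= X](eq_bigr (fun ks => move_weight p q s ks - \sum_(i < L) move_weight p q s ks * g m (nth 0%N s i - nth 0%N ks i))); last first.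
  by move=> ks _; rewrite mulrBr mulr1 mulr_sumr.
rewrite sumrB weight_sum.
rewrite [X in _ <= _ - X]exchange_big /=.
rewrite lerD2l lerN2; apply: ler_sum => i _.
rewrite (weight_marg s i (fun k => g m (nth 0%N s i - k))).
  exact: step_bound.
exact: leq_trans (ltn_ord i) hL.
Qed.
End Comb.
Arguments g {R}.
Arguments u {R}.
Arguments u_ge0 {R p}.
Arguments main_bound {R p q}.
Arguments prob_le1 {R p q}.

Lemma size_le_sumn s : all (fun h => 0 < h)%N s -> (size s <= sumn s)%N.
Proof.
elim: s => [|x s IH] //= /andP [h1 h2].
by rewrite -add1n leq_add // IH.
Qed.

Lemma nth_le_sumn s i : (nth 0%N s i <= sumn s)%N.
Proof.
elim: s i => [|x s IH] [|i] //=; first exact: leq_addr.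
exact: leq_trans (IH i) (leq_addl _ _).
Qed.

Lemma sum_g_bound (R : realType) (pn : R) n s M : 0 < pn <= 1 -> is_config n s ->
  \sum_(i < size s) g pn M (nth 0%N s i) <= n%:R * 2 ^+ n * u pn ^+ M.
Proof.
move=> hp /andP [hpos /eqP hsum].
have hsize : (size s <= n)%N by rewrite -hsum size_le_sumn.
have hu := u_ge0 hp.
apply: le_trans (_ : \sum_(i < size s) (2 ^+ n * u pn ^+ M) <= _).
  apply: ler_sum => i _; rewrite /g; case: eqP => _.
    by apply: mulr_ge0; apply: exprn_ge0.
  apply: ler_wpM2r; first exact: exprn_ge0.
  by apply: ler_weXn2l; [lra | rewrite -hsum nth_le_sumn].
rewrite sumr_const card_ord -[_ *+ size s]mulr_natl -[in X in _ <= X]mulrA.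
apply: ler_wpM2r; first by apply: mulr_ge0; apply: exprn_ge0.
by rewrite ler_nat.
Qed.

Lemma tail_bound (R : realType) (pn : R) (n : nat) : 0 < pn <= 1 -> (4 <= n)%N ->
  n%:R * 2 ^+ n * (u pn) ^+ `|Num.ceil ((n ^ 2)%:R / pn)|%N <= 4 / n.+1%:R.
Proof.
move=> hp hn; have hu := u_ge0 hp; move: hp => /andP [hp0 hp1].
set M := `|Num.ceil _|%N.
set x : R := n%:R.
have hx4 : 4 <= x by rewrite /x (ler_nat R 4 n).
have hM : x ^+ 2 / pn <= M%:R.
  rewrite /M natr_absz ger0_norm.
    by rewrite /x -natrX; exact: ceil_ge.
  rewrite ceil_ge0; apply: lt_le_trans (_ : 0 <= _); first by [].
  by apply: divr_ge0; [rewrite ler0n | exact: ltW].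
have hM' : x ^+ 2 <= M%:R * pn by rewrite -ler_pdivrMr.
have hue : u pn <= expR (- (pn / 2)) by have := expR_ge1Dx (- (pn / 2)); rewrite /u.
have E1 : u pn ^+ M <= expR (- (x ^+ 2 / 2)).
  apply: le_trans (_ : expR (- (pn / 2)) ^+ M <= _).
    by apply: lerXn2r; rewrite ?nnegrE //; exact: ltW (expR_gt0 _).
  rewrite -expRM_natl ler_expR.
  nra.
have E2 : 2 ^+ n <= expR x.
  have h2 : 2 <= expR (1 : R) by rewrite -[2]/(1 + 1 : R); exact: expR_ge1Dx.
  apply: le_trans (_ : expR 1 ^+ n <= _).
    by apply: lerXn2r; rewrite ?nnegrE //; exact: ltW (expR_gt0 _).
  by rewrite -expRM_natl mulr1.
have E3 : x * 2 ^+ n * u pn ^+ M <= x * expR (- x).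
  rewrite -mulrA; apply: ler_wpM2l; first by rewrite /x ler0n.
  apply: le_trans (_ : expR x * expR (- (x ^+ 2 / 2)) <= _).
    by apply: ler_pM => //; apply: exprn_ge0.
  rewrite -expRD ler_expR.
  nra.
have E4 : x * expR (- x) <= 4 / n.+1%:R.
  have he : (1 + x / 2) ^+ 2 <= expR x.
    have -> : expR x = expR (x / 2) ^+ 2 by rewrite expr2 -expRD -splitr.
    apply: lerXn2r; rewrite ?nnegrE; [lra | exact: ltW (expR_gt0 _) | exact: expR_ge1Dx].
  have hn1 : n.+1%:R = x + 1 by rewrite /x -addn1 natrD.
  have hepos := expR_gt0 x.
  rewrite hn1 expRN ler_pdivlMr; last lra.
  rewrite mulrAC ler_pdivrMr //.
  nra.
exact: le_trans E3 E4.
Qed.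

Theorem lemma4 (R : realType) (p q : nat -> R) (alpha : nat -> seq nat)
  (hp : forall n, 0 < p n <= 1) (hq : forall n, 0 < q n <= 1)
  (halpha : forall n, is_config n (alpha n)) :
  (fun n => prob_first_empty (p n) (q n)
              `|Num.ceil ((n ^ 2)%:R / p n)|%N (size (alpha n)) (alpha n))
    @ \oo --> (1 : R).
Proof.
have hf : (fun n => 1 - 4 * harmonic n) @ \oo --> (1 : R).
  have h := cvgB (cvg_cst (1 : R)) (cvgM (cvg_cst (4 : R)) (@cvg_harmonic R)).
  rewrite mulr0 subr0 in h. apply: h; exact: _.
apply: (squeeze_cvgr _ hf (cvg_cst (1 : R))).
apply: filterS (nbhs_infty_ge 4) => n hn /=.
apply/andP; split; last exact: prob_le1.
apply: le_trans (main_bound (hp n) (hq n) _ _ _ (leqnn _)).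
rewrite lerD2l lerN2.
apply: le_trans (@sum_g_bound _ _ _ _ _ (hp n) (halpha n)) _.
apply: le_trans (@tail_bound _ _ _ (hp n) hn) _.
by rewrite /harmonic /=.
Qed.
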